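(* In the closed-loop system of Controller 3 (see context), assume $\xi_i=0$ for all $i\neq k$ and $\xi_k>0$ for one index $k$. Then for every initial condition (with $\omega_i(t_0)=0$), $\phi_i-\bar\phi_i\to 0$ and $\dot\phi_i\to \xi_k/n$ as $t\to\infty$ for all $i=1,\dots,n$.
   Context: Controller 3: for $n\ge2$ robots with real-valued phases $\phi_i$ (indexed counterclockwise at the initial time), gains $k_\phi,k_\omega>0$ and nonnegative constants $\xi_i$, the phase dynamics are $\dot\omega_i=k_\omega(\bar\phi_i-\phi_i)$, $\omega_i(t_0)=0$, $\dot\phi_i=\omega_i+k_\phi(\bar\phi_i-\phi_i)+\xi_i$, where $\bar\phi_1=\frac{\phi_2+\phi_n-2\pi}{2}$, $\bar\phi_i=\frac{\phi_{i+1}+\phi_{i-1}}{2}$ for $2\le i\le n-1$, $\bar\phi_n=\frac{\phi_1+2\pi+\phi_{n-1}}{2}$. *)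

(* Defs.v *)
From Stdlib Require Import Reals Lra Lia.
Open Scope R_scope.

(* Robots are indexed 0..n-1 (paper: 1..n).  [phis i] is the phase of robot i.
   phibar for Controller 3 (with the 2*pi wrap between robot n and robot 1). *)
Definition phibar (n : nat) (phis : nat -> R) (i : nat) : R :=
  if Nat.eqb i 0 then (phis 1%nat + phis (n - 1)%nat - 2 * PI) / 2
  else if Nat.eqb i (n - 1)%nat then (phis 0%nat + 2 * PI + phis (n - 2)%nat) / 2
  else (phis (i + 1)%nat + phis (i - 1)%nat) / 2.

Definition tends_at_infty (f : R -> R) (l : R) : Prop :=
  forall eps : R, eps > 0 -> exists T : R, forall t : R, t >= T -> Rabs (f t - l) < eps.

Definition right_cont_at (f : R -> R) (t0 : R) : Prop :=
  forall eps : R, eps > 0 -> exists delta : R, delta > 0 /\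
    forall t : R, t0 <= t < t0 + delta -> Rabs (f t - f t0) < eps.

(* Main.v *)
Require Import Defs.
From Stdlib Require Import Reals Lra Lia Psatz.
Open Scope R_scope.

Fixpoint sm (f : nat -> R) (m : nat) : R :=
  match m with O => 0 | S m' => sm f m' + f m' end.

Lemma sm_ext f g m : (forall i, (i < m)%nat -> f i = g i) -> sm f m = sm g m.
Proof. induction m; simpl; intros H; auto. rewrite IHm by (intros; apply H; lia). rewrite H by lia. auto. Qed.

Lemma sm_plus f g m : sm (fun i => f i + g i) m = sm f m + sm g m.
Proof. induction m; simpl; [lra|]. rewrite IHm; lra. Qed.

Lemma sm_scal c f m : sm (fun i => c * f i) m = c * sm f m.
Proof. induction m; simpl; [lra|]. rewrite IHm; lra. Qed.

Lemma sm_const c m : sm (fun _ => c) m = INR m * c.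
Proof. induction m; simpl sm; [simpl; lra|]. rewrite IHm, S_INR; lra. Qed.

Lemma sm_le f g m : (forall i, (i < m)%nat -> f i <= g i) -> sm f m <= sm g m.
Proof. induction m; simpl; intros H; [lra|]. assert (f m <= g m) by (apply H; lia).
 assert (sm f m <= sm g m) by (apply IHm; intros; apply H; lia). lra. Qed.

Lemma sm_nonneg f m : (forall i, (i < m)%nat -> 0 <= f i) -> 0 <= sm f m.
Proof. intros H. rewrite <- (Rmult_0_r (INR m)), <- sm_const. apply sm_le. auto. Qed.

Lemma sm_abs f m : Rabs (sm f m) <= sm (fun i => Rabs (f i)) m.
Proof. induction m; simpl. rewrite Rabs_R0; lra.
 eapply Rle_trans; [apply Rabs_triang|]. lra. Qed.

Lemma sm_shift f m : sm (fun i => f (S i)) m + f O = sm f (S m).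
Proof. induction m; simpl; [lra|]. simpl in IHm. lra. Qed.

Lemma sm_single f m k : (k < m)%nat -> (forall i, (i < m)%nat -> 0 <= f i) -> f k <= sm f m.
Proof. induction m; intros Hk H; [lia|]. simpl.
 assert (0 <= sm f m) by (apply sm_nonneg; intros; apply H; lia).
 destruct (Nat.eq_dec k m). subst. lra.
 assert (f k <= sm f m) by (apply IHm; [lia| intros; apply H; lia]).
 assert (0 <= f m) by (apply H; lia). lra. Qed.

Lemma sm_only f m k : (k < m)%nat -> (forall i, (i < m)%nat -> i <> k -> f i = 0) -> sm f m = f k.
Proof. induction m; intros Hk H; [lia|]. simpl.
 destruct (Nat.eq_dec k m). subst.
 rewrite (sm_ext f (fun _ => 0)) by (intros; apply H; lia). rewrite sm_const; lra.
 rewrite IHm by (try lia; intros; apply H; lia). rewrite (H m) by lia. lra. Qed.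

Definition nx (n i : nat) : nat := if Nat.eqb (S i) n then O else S i.
Definition pv (n i : nat) : nat := if Nat.eqb i O then (n - 1)%nat else (i - 1)%nat.

Lemma nx_lt n i : (i < n)%nat -> (nx n i < n)%nat.
Proof. unfold nx; intros; destruct (Nat.eqb_spec (S i) n); lia. Qed.
Lemma pv_lt n i : (i < n)%nat -> (pv n i < n)%nat.
Proof. unfold pv; intros; destruct (Nat.eqb_spec i 0); lia. Qed.
Lemma pv_nx n i : (i < n)%nat -> pv n (nx n i) = i.
Proof. unfold nx, pv; intros; destruct (Nat.eqb_spec (S i) n);
  [destruct (Nat.eqb_spec 0 0)| destruct (Nat.eqb_spec (S i) 0)]; lia. Qed.
Lemma nx_pv n i : (i < n)%nat -> nx n (pv n i) = i.
Proof. unfold nx, pv; intros; destruct (Nat.eqb_spec i 0);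
  [destruct (Nat.eqb_spec (S (n-1)) n)| destruct (Nat.eqb_spec (S (i-1)) n)]; lia. Qed.

Lemma sm_nx n f : (1 <= n)%nat -> sm (fun i => f (nx n i)) n = sm f n.
Proof. intros Hn. destruct n as [|m]; [lia|]. simpl sm at 1.
 rewrite (sm_ext _ (fun i => f (S i))).
 2:{ intros i Hi. unfold nx. destruct (Nat.eqb_spec (S i) (S m)); [lia|auto]. }
 unfold nx at 1. rewrite Nat.eqb_refl. apply sm_shift. Qed.

Lemma sm_pv n f : (1 <= n)%nat -> sm (fun i => f (pv n i)) n = sm f n.
Proof. intros Hn. rewrite <- (sm_nx n (fun i => f (pv n i))) by auto.
 apply sm_ext; intros; rewrite pv_nx; auto. Qed.

Lemma Ksw n u x : (1 <= n)%nat ->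
  sm (fun i => u i * x (nx n i)) n = sm (fun i => x i * u (pv n i)) n.
Proof. intros Hn. rewrite <- (sm_nx n (fun j => x j * u (pv n j))) by auto.
 apply sm_ext; intros; rewrite pv_nx; auto; ring. Qed.

Definition Mop (n : nat) (x : nat -> R) (i : nat) : R := x i - (x (nx n i) + x (pv n i)) / 2.

Lemma L1 n x : (1 <= n)%nat -> sm (Mop n x) n = 0.
Proof. intros Hn. unfold Mop.
 rewrite (sm_ext _ (fun i => x i + ((-1/2) * x (nx n i) + (-1/2) * x (pv n i)))) by (intros; field).
 rewrite !sm_plus, !sm_scal, (sm_nx n x), (sm_pv n x) by auto. lra. Qed.

Lemma L2 n u x : (1 <= n)%nat ->
  sm (fun i => u i * Mop n x i) n = sm (fun i => x i * Mop n u i) n.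
Proof. intros Hn. unfold Mop.
 rewrite (sm_ext (fun i => u i * _) (fun i => u i * x i + ((-1/2) * (u i * x (nx n i)) + (-1/2) * (u i * x (pv n i))))) by (intros; field).
 rewrite (sm_ext (fun i => x i * _) (fun i => u i * x i + ((-1/2) * (x i * u (nx n i)) + (-1/2) * (x i * u (pv n i))))) by (intros; field).
 rewrite !sm_plus, !sm_scal, (Ksw n u x), (Ksw n x u) by auto. lra. Qed.

Lemma L3 n x : (1 <= n)%nat ->
  sm (fun i => Mop n x i * Mop n x i) n <= 2 * sm (fun i => x i * Mop n x i) n.
Proof. intros Hn. set (d := fun i => x (nx n i) - x i).
 assert (E1 : sm (fun i => x i * Mop n x i) n = sm (fun i => x i * x i) n - sm (fun i => x i * x (nx n i)) n).
 { unfold Mop. rewrite (sm_ext _ (fun i => x i * x i + ((-1/2) * (x i * x (nx n i)) + (-1/2) * (x i * x (pv n i))))) by (intros; field).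
   rewrite !sm_plus, !sm_scal, <- (Ksw n x x) by auto. lra. }
 assert (E2 : sm (fun i => d i * d i) n = 2 * sm (fun i => x i * x i) n - 2 * sm (fun i => x i * x (nx n i)) n).
 { unfold d. rewrite (sm_ext _ (fun i => (fun j => x j * x j) (nx n i) + ((-2) * (x i * x (nx n i)) + x i * x i))) by (intros; simpl; ring).
   rewrite !sm_plus, sm_scal, (sm_nx n (fun j => x j * x j)) by auto. lra. }
 assert (E3 : sm (fun i => Mop n x i * Mop n x i) n <= sm (fun i => (1/2) * (d (pv n i) * d (pv n i)) + (1/2) * (d i * d i)) n).
 { apply sm_le; intros i Hi. unfold Mop, d. rewrite nx_pv by auto.
   set (A := x (pv n i)); set (B := x i); set (C := x (nx n i)).
   clearbody A B C. assert (0 <= (C-A)*(C-A)) by apply Rle_0_sqr.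
   assert (1 / 2 * ((B - A) * (B - A)) + 1 / 2 * ((C - B) * (C - B)) - (B - (C + A) / 2) * (B - (C + A) / 2) = (C-A)*(C-A)/4) by field. lra. }
 rewrite sm_plus, !sm_scal, (sm_pv n (fun j => d j * d j)) in E3 by auto. lra. Qed.

Lemma sq_abs_le y s : 0 <= s -> y * y <= s * s -> Rabs y <= s.
Proof. intros H0 H1. destruct (Rcase_abs y) as [H|H]; [rewrite Rabs_left by lra| rewrite Rabs_right by lra]; nra. Qed.

Lemma abs_sq y B : Rabs y <= B -> y * y <= B * B.
Proof. intros H. destruct (Rcase_abs y) as [H1|H1]; [rewrite Rabs_left in H by lra| rewrite Rabs_right in H by lra]; nra. Qed.

Lemma absz z m B : (1 <= m)%nat -> sm z m = 0 ->
  (forall i, (i < m)%nat -> Rabs (z i - z O) <= B) -> Rabs (z O) <= B.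
Proof. intros Hm Hs H.
 assert (E : INR m * z O = sm (fun i => z O + (-1) * z i) m).
 { rewrite sm_plus, sm_scal, sm_const, Hs. ring. }
 assert (H2 : Rabs (INR m * z O) <= INR m * B).
 { rewrite E. eapply Rle_trans; [apply sm_abs|]. rewrite <- sm_const. apply sm_le.
   intros i Hi. rewrite <- Rabs_Ropp. replace (- (z O + -1 * z i)) with (z i - z O) by ring. auto. }
 assert (1 <= INR m) by (apply (le_INR 1); auto).
 rewrite Rabs_mult, (Rabs_right (INR m)) in H2 by lra.
 destruct (Rle_dec (Rabs (z O)) B); auto. nra. Qed.

Lemma L5 n x : (2 <= n)%nat -> sm x n = 0 ->
  sm (fun i => x i * x i) n <= (INR n * (64 * INR n ^ 4)) * sm (fun i => Mop n x i * Mop n x i) n.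
Proof. intros Hn Hx.
 set (W := sm (fun i => Mop n x i * Mop n x i) n).
 assert (HW : 0 <= W) by (apply sm_nonneg; intros; apply Rle_0_sqr).
 set (s := sqrt W).
 assert (Hs : 0 <= s) by apply sqrt_pos.
 assert (Hss : s * s = W) by (apply sqrt_sqrt; auto).
 assert (Hw : forall i, (i < n)%nat -> Rabs (Mop n x i) <= s).
 { intros i Hi. apply sq_abs_le; auto. rewrite Hss.
   apply (sm_single (fun i => Mop n x i * Mop n x i)); auto. intros; apply Rle_0_sqr. }
 set (N := INR n). assert (HN : 2 <= N) by (apply (le_INR 2); auto).
 set (d := fun i => x (nx n i) - x i).
 assert (F2 : forall i, (i < n)%nat -> Rabs (d i - d O) <= 2 * INR i * s).
 { induction i as [|i IH]; intros Hi.
   - replace (d O - d O) with 0 by ring. rewrite Rabs_R0. simpl; lra.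
   - assert (E : d (S i) = d i - 2 * Mop n x (S i)).
     { unfold d, Mop. replace (pv n (S i)) with i by (unfold pv; simpl; lia).
       replace (nx n i) with (S i) by (unfold nx; destruct (Nat.eqb_spec (S i) n); lia). field. }
     rewrite E. specialize (IH ltac:(lia)). specialize (Hw (S i) Hi). rewrite S_INR.
     replace (d i - 2 * Mop n x (S i) - d O) with ((d i - d O) + (-2) * Mop n x (S i)) by ring.
     eapply Rle_trans; [apply Rabs_triang|]. rewrite Rabs_mult. rewrite (Rabs_left (-2)) by lra. lra. }
 assert (Hd0 : sm d n = 0).
 { unfold d. rewrite (sm_ext _ (fun i => x (nx n i) + (-1) * x i)) by (intros; ring).
   rewrite sm_plus, sm_scal, sm_nx by lia. lra. }
 assert (Hdb : forall i, (i < n)%nat -> Rabs (d i) <= 4 * N * s).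
 { assert (Ha : Rabs (d O) <= 2 * N * s).
   { apply absz with n; auto; try lia. intros i Hi. eapply Rle_trans; [apply F2; auto|].
     assert (INR i <= N) by (apply le_INR; lia). nra. }
   intros i Hi. replace (d i) with ((d i - d O) + d O) by ring.
   eapply Rle_trans; [apply Rabs_triang|]. assert (INR i <= N) by (apply le_INR; lia).
   specialize (F2 i Hi). nra. }
 assert (F5 : forall i, (i < n)%nat -> Rabs (x i - x O) <= INR i * (4 * N * s)).
 { induction i as [|i IH]; intros Hi.
   - replace (x O - x O) with 0 by ring. rewrite Rabs_R0. simpl; lra.
   - assert (E : x (S i) = x i + d i).
     { unfold d. replace (nx n i) with (S i) by (unfold nx; destruct (Nat.eqb_spec (S i) n); lia). ring. }
     rewrite E, S_INR. specialize (IH ltac:(lia)). specialize (Hdb i ltac:(lia)).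
     replace (x i + d i - x O) with ((x i - x O) + d i) by ring.
     eapply Rle_trans; [apply Rabs_triang|]. lra. }
 assert (Hx0 : Rabs (x O) <= 4 * N * N * s).
 { apply absz with n; auto; try lia. intros i Hi. eapply Rle_trans; [apply F5; auto|].
   assert (INR i <= N) by (apply le_INR; lia). assert (0 <= 4 * N * s) by nra. nra. }
 assert (Hxi : forall i, (i < n)%nat -> x i * x i <= 64 * N ^ 4 * W).
 { intros i Hi. assert (Rabs (x i) <= 8 * N * N * s).
   { replace (x i) with ((x i - x O) + x O) by ring. eapply Rle_trans; [apply Rabs_triang|].
     assert (INR i <= N) by (apply le_INR; lia). specialize (F5 i Hi).
     assert (0 <= 4 * N * s) by nra. nra. }
   apply abs_sq in H. rewrite <- Hss. nra. }
 eapply Rle_trans. apply (sm_le _ (fun _ => 64 * N ^ 4 * W)); auto.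
 rewrite sm_const. fold N. lra. Qed.

Lemma L4 n x : (2 <= n)%nat ->
  sm (fun i => x i * Mop n x i) n <= ((INR n * (64 * INR n ^ 4)) + 1) / 2 * sm (fun i => Mop n x i * Mop n x i) n.
Proof. intros Hn. assert (HN : 2 <= INR n) by (apply (le_INR 2); auto).
 set (m := sm x n / INR n). set (z := fun i => x i - m).
 assert (Hz : sm z n = 0).
 { unfold z. rewrite (sm_ext _ (fun i => x i + (-1) * m)) by (intros; ring).
   rewrite sm_plus, sm_const. unfold m. field. lra. }
 assert (HM : forall i, Mop n z i = Mop n x i) by (intros; unfold Mop, z; field).
 assert (E : sm (fun i => x i * Mop n x i) n = sm (fun i => z i * Mop n z i) n).
 { rewrite (sm_ext (fun i => x i * Mop n x i) (fun i => z i * Mop n z i + m * Mop n x i)).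
   2:{ intros. rewrite HM. unfold z. ring. }
   rewrite sm_plus, (sm_scal m (Mop n x)), L1 by lia. ring. }
 assert (E2 : sm (fun i => Mop n z i * Mop n z i) n = sm (fun i => Mop n x i * Mop n x i) n)
   by (apply sm_ext; intros; rewrite HM; auto).
 rewrite E. eapply Rle_trans.
 apply (sm_le _ (fun i => (1/2) * (z i * z i) + (1/2) * (Mop n z i * Mop n z i))).
 { intros. assert (0 <= (z i - Mop n z i) * (z i - Mop n z i)) by apply Rle_0_sqr. lra. }
 rewrite sm_plus, !sm_scal. pose proof (L5 n z Hn Hz). rewrite E2 in *. lra. Qed.

Definition Vf n kom eps (p q : nat -> R) :=
  kom * sm (fun i => p i * Mop n p i) n + sm (fun i => q i * q i) n - eps * sm (fun i => q i * Mop n p i) n.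
Definition Df n kom eps (p q p' q' : nat -> R) :=
  kom * sm (fun i => p' i * Mop n p i + p i * Mop n p' i) n + sm (fun i => q' i * q i + q i * q' i) n
  - eps * sm (fun i => q' i * Mop n p i + q i * Mop n p' i) n.

Lemma ym_bound k y m : k > 0 -> y * m <= k * (y * y) + / (4 * k) * (m * m).
Proof. intros Hk. assert (0 <= (2*k*y - m) * (2*k*y - m)) by apply Rle_0_sqr.
 assert (E : k * (y * y) + / (4 * k) * (m * m) - y * m = / (4 * k) * ((2*k*y - m) * (2*k*y - m))) by (field; lra).
 assert (0 < / (4 * k)) by (apply Rinv_0_lt_compat; lra). nra. Qed.

Lemma qy_bound q y : q * y >= -(1/2) * (q * q) + -(1/2) * (y * y).
Proof. assert (0 <= (q + y) * (q + y)) by apply Rle_0_sqr. lra. Qed.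

Lemma qy_bound2 q y : q * y <= (1/2) * (q * q) + (1/2) * (y * y).
Proof. assert (0 <= (q - y) * (q - y)) by apply Rle_0_sqr. lra. Qed.

Lemma LB n kom eps p q : (2 <= n)%nat -> kom > 0 -> 0 < eps -> eps <= 1 -> eps <= kom / 2 ->
  Vf n kom eps p q >= kom / 4 * sm (fun i => Mop n p i * Mop n p i) n + 1/2 * sm (fun i => q i * q i) n.
Proof. intros Hn Hk He1 He2 He3. unfold Vf.
 pose proof (L3 n p ltac:(lia)) as H3.
 assert (Hq : sm (fun i => q i * Mop n p i) n <= (1/2) * sm (fun i => q i * q i) n + (1/2) * sm (fun i => Mop n p i * Mop n p i) n).
 { rewrite <- !sm_scal, <- sm_plus. apply sm_le. intros; apply qy_bound2. }
 set (S := sm (fun i => p i * Mop n p i) n) in *. set (Y := sm (fun i => Mop n p i * Mop n p i) n) in *.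
 set (Q := sm (fun i => q i * q i) n) in *. set (C := sm (fun i => q i * Mop n p i) n) in *.
 assert (0 <= Q) by (apply sm_nonneg; intros; apply Rle_0_sqr).
 assert (0 <= Y) by (apply sm_nonneg; intros; apply Rle_0_sqr).
 assert (eps * C <= eps * ((1/2) * Q + (1/2) * Y)) by (apply Rmult_le_compat_l; lra).
 assert (kom * Y <= kom * (2 * S)) by (apply Rmult_le_compat_l; lra).
 assert (eps * Y <= kom / 2 * Y) by (apply Rmult_le_compat_r; lra).
 assert (eps * Q <= 1 * Q) by (apply Rmult_le_compat_r; lra).
 lra. Qed.

Definition K5 n := INR n * (64 * INR n ^ 4).

Lemma K5pos n : (2 <= n)%nat -> K5 n > 0.
Proof. intros. unfold K5. assert (2 <= INR n) by (apply (le_INR 2); auto).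
 assert (0 < INR n ^ 4) by (apply pow_lt; lra). nra. Qed.

Lemma ALG n kphi kom eps a : (2 <= n)%nat -> kphi > 0 -> kom > 0 -> 0 < eps -> eps <= 1 ->
  eps * (kom + kphi * kphi) <= kom * kphi ->
  forall p q p' q', (forall i, (i < n)%nat -> p' i = q i + a - kphi * Mop n p i) ->
   (forall i, (i < n)%nat -> q' i = - kom * Mop n p i) -> sm q n = 0 ->
   Df n kom eps p q p' q' <= - (Rmin (kom * kphi / (kom * ((K5 n + 1)/2) + 1)) (eps / (8 * K5 n))) * Vf n kom eps p q.
Proof. intros Hn Hkp Hko He1 He2 He3 p q p' q' Hp' Hq' Hq0.
 assert (Hn1 : (1 <= n)%nat) by lia.
 pose proof (K5pos n Hn) as HK.
 set (y := Mop n p).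
 set (Y2 := sm (fun i => y i * y i) n).
 set (E := sm (fun i => q i * Mop n q i) n).
 set (Sqy := sm (fun i => q i * y i) n).
 set (Z := sm (fun i => y i * Mop n q i) n).
 set (MQ2 := sm (fun i => Mop n q i * Mop n q i) n).
 set (Q2 := sm (fun i => q i * q i) n).
 set (Spy := sm (fun i => p i * y i) n).
 assert (HY2 : 0 <= Y2) by (apply sm_nonneg; intros; apply Rle_0_sqr).
 assert (HQ2 : 0 <= Q2) by (apply sm_nonneg; intros; apply Rle_0_sqr).
 assert (HMQ : MQ2 <= 2 * E) by (apply L3; auto).
 assert (HMQ0 : 0 <= MQ2) by (apply sm_nonneg; intros; apply Rle_0_sqr).
 assert (Hpy : sm (fun i => p' i * y i) n = Sqy - kphi * Y2).
 { rewrite (sm_ext _ (fun i => q i * y i + (a * y i + (- kphi) * (y i * y i)))).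
   2:{ intros. rewrite Hp' by auto. unfold y. ring. }
   rewrite !sm_plus, !sm_scal. unfold y. rewrite L1 by auto. fold y. unfold Sqy, Y2. ring. }
 assert (HD1 : sm (fun i => p' i * Mop n p i + p i * Mop n p' i) n = 2 * (Sqy - kphi * Y2)).
 { rewrite sm_plus, (L2 n p p') by auto. fold y. rewrite Hpy. ring. }
 assert (HD2 : sm (fun i => q' i * q i + q i * q' i) n = -2 * kom * Sqy).
 { rewrite (sm_ext _ (fun i => (-2 * kom) * (q i * y i))).
   2:{ intros. rewrite Hq' by auto. unfold y. ring. }
   rewrite sm_scal. auto. }
 assert (HD3 : sm (fun i => q' i * Mop n p i + q i * Mop n p' i) n = - kom * Y2 + (E - kphi * Z)).
 { rewrite sm_plus, (L2 n q p') by auto.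
   rewrite (sm_ext (fun i => q' i * Mop n p i) (fun i => - kom * (y i * y i))).
   2:{ intros. rewrite Hq' by auto. unfold y. ring. }
   rewrite (sm_ext (fun i => p' i * Mop n q i) (fun i => q i * Mop n q i + (a * Mop n q i + (- kphi) * (y i * Mop n q i)))).
   2:{ intros. rewrite Hp' by auto. unfold y. ring. }
   rewrite !sm_plus, !sm_scal, L1 by auto. unfold E, Z, Y2. ring. }
 assert (HZ : Z <= kphi * Y2 + / (4 * kphi) * MQ2).
 { unfold Z, Y2, MQ2. rewrite <- !sm_scal, <- sm_plus. apply sm_le. intros. apply ym_bound; auto. }
 assert (HD : Df n kom eps p q p' q' <= - (kom * kphi) * Y2 - eps / 2 * E).
 { unfold Df. rewrite HD1, HD2, HD3.
   assert (eps * kphi * Z <= eps * kphi * (kphi * Y2 + / (4 * kphi) * MQ2))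
     by (apply Rmult_le_compat_l; nra).
   assert (E1 : eps * kphi * (kphi * Y2 + / (4 * kphi) * MQ2) = eps * kphi * kphi * Y2 + eps / 4 * MQ2) by (field; lra).
   assert (eps / 4 * MQ2 <= eps / 4 * (2 * E)) by (apply Rmult_le_compat_l; lra).
   assert (eps * (kom + kphi * kphi) * Y2 <= kom * kphi * Y2) by (apply Rmult_le_compat_r; lra).
   nra. }
 assert (HSpy : Spy <= (K5 n + 1) / 2 * Y2) by (apply L4; auto).
 assert (HQ2b : Q2 <= K5 n * MQ2) by (apply L5; auto).
 assert (HSqy : Sqy >= -(1/2) * Q2 + -(1/2) * Y2).
 { unfold Sqy, Q2, Y2. rewrite <- !sm_scal, <- sm_plus. apply Rle_ge, sm_le. intros; apply Rge_le, qy_bound. }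
 set (A1 := kom * ((K5 n + 1) / 2) + 1).
 assert (HA1 : A1 > 0). { unfold A1. nra. }
 assert (HV : Vf n kom eps p q <= A1 * Y2 + 4 * K5 n * E).
 { unfold Vf. fold y. fold Spy Q2 Sqy.
   assert (kom * Spy <= kom * ((K5 n + 1) / 2 * Y2)) by (apply Rmult_le_compat_l; lra).
   assert (eps * Sqy >= eps * (-(1/2) * Q2 + -(1/2) * Y2)) by (apply Rle_ge, Rmult_le_compat_l; lra).
   assert (eps * Q2 <= 1 * Q2) by (apply Rmult_le_compat_r; lra).
   assert (eps * Y2 <= 1 * Y2) by (apply Rmult_le_compat_r; lra).
   assert (K5 n * MQ2 <= K5 n * (2 * E)) by (apply Rmult_le_compat_l; lra).
   unfold A1. nra. }
 set (c := Rmin (kom * kphi / A1) (eps / (8 * K5 n))).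
 assert (Hc1 : c * A1 <= kom * kphi).
 { assert (c <= kom * kphi / A1) by apply Rmin_l.
   assert (kom * kphi / A1 * A1 = kom * kphi) by (field; lra). nra. }
 assert (Hc2 : c * (4 * K5 n) <= eps / 2).
 { assert (c <= eps / (8 * K5 n)) by apply Rmin_r.
   assert (eps / (8 * K5 n) * (4 * K5 n) = eps / 2) by (field; lra). nra. }
 assert (Hc0 : 0 < c).
 { unfold c. apply Rmin_glb_lt; apply Rdiv_lt_0_compat; nra. }
 assert (HE : 0 <= E) by lra.
 assert (c * Vf n kom eps p q <= c * (A1 * Y2 + 4 * K5 n * E)) by (apply Rmult_le_compat_l; lra).
 assert (c * A1 * Y2 <= kom * kphi * Y2) by (apply Rmult_le_compat_r; lra).
 assert (c * (4 * K5 n) * E <= eps / 2 * E) by (apply Rmult_le_compat_r; lra).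
 fold c. nra. Qed.

Lemma dplus f g x l1 l2 : derivable_pt_lim f x l1 -> derivable_pt_lim g x l2 ->
  derivable_pt_lim (fun t => f t + g t) x (l1 + l2).
Proof. intros. exact (derivable_pt_lim_plus f g x l1 l2 H H0). Qed.
Lemma dminus f g x l1 l2 : derivable_pt_lim f x l1 -> derivable_pt_lim g x l2 ->
  derivable_pt_lim (fun t => f t - g t) x (l1 - l2).
Proof. intros. exact (derivable_pt_lim_minus f g x l1 l2 H H0). Qed.
Lemma dmult f g x l1 l2 : derivable_pt_lim f x l1 -> derivable_pt_lim g x l2 ->
  derivable_pt_lim (fun t => f t * g t) x (l1 * g x + f x * l2).
Proof. intros. exact (derivable_pt_lim_mult f g x l1 l2 H H0). Qed.
Lemma dscal c f x l : derivable_pt_lim f x l -> derivable_pt_lim (fun t => c * f t) x (c * l).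
Proof. intros. exact (derivable_pt_lim_scal f c x l H). Qed.
Lemma dconst c x : derivable_pt_lim (fun _ => c) x 0.
Proof. exact (derivable_pt_lim_const c x). Qed.
Lemma dext f x l1 l2 : l1 = l2 -> derivable_pt_lim f x l1 -> derivable_pt_lim f x l2.
Proof. intros ->; auto. Qed.

Lemma dsum (F : nat -> R -> R) (F' : nat -> R) x m :
  (forall i, (i < m)%nat -> derivable_pt_lim (F i) x (F' i)) ->
  derivable_pt_lim (fun t => sm (fun i => F i t) m) x (sm F' m).
Proof. induction m; intros H; simpl.
 - apply dconst.
 - apply dplus. apply IHm; intros; apply H; lia. apply H; lia. Qed.

Lemma dMop (X : R -> nat -> R) (X' : nat -> R) n t i : (i < n)%nat ->
  (forall j, (j < n)%nat -> derivable_pt_lim (fun s => X s j) t (X' j)) ->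
  derivable_pt_lim (fun s => Mop n (X s) i) t (Mop n X' i).
Proof. intros Hi H. unfold Mop.
 apply dminus. apply H; auto.
 apply (dext _ _ ((X' (nx n i) + X' (pv n i)) * / 2)). unfold Rdiv; auto.
 apply (dext _ _ ((X' (nx n i) + X' (pv n i)) * (fun _ => /2) t + (fun s => X s (nx n i) + X s (pv n i)) t * 0)). simpl; ring.
 apply (dmult (fun s => X s (nx n i) + X s (pv n i)) (fun _ => /2)).
 apply dplus; apply H; [apply nx_lt|apply pv_lt]; auto. apply dconst. Qed.

Lemma MVB f f' a b K : a <= b -> (forall x, a <= x <= b -> derivable_pt_lim f x (f' x)) ->
  (forall x, a <= x <= b -> f' x <= K) -> f b - f a <= K * (b - a).
Proof. intros Hab Hd HK. destruct (Req_dec a b) as [->|Hne]. lra.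
 destruct (MVT_cor2 f f' a b ltac:(lra) Hd) as [c [E Hc]]. rewrite E.
 apply Rmult_le_compat_r; [lra|]. apply HK; lra. Qed.

Lemma Dcst f f' a b : a <= b -> (forall x, a <= x <= b -> derivable_pt_lim f x (f' x)) ->
  (forall x, a <= x <= b -> f' x = 0) -> f b = f a.
Proof. intros Hab Hd HK. destruct (Req_dec a b) as [->|Hne]. lra.
 destruct (MVT_cor2 f f' a b ltac:(lra) Hd) as [c [E Hc]]. rewrite HK in E by lra. lra. Qed.

Lemma rc_sum (F : nat -> R -> R) t0 m : (forall i, (i < m)%nat -> right_cont_at (F i) t0) ->
  right_cont_at (fun t => sm (fun i => F i t) m) t0.
Proof. induction m; intros H; simpl.
 - intros eps He. exists 1. split; [lra|]. intros. rewrite Rminus_0_r, Rabs_R0; lra.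
 - intros eps He.
   destruct (IHm ltac:(intros; apply H; lia) (eps/2) ltac:(lra)) as [d1 [Hd1 H1]].
   destruct (H m ltac:(lia) (eps/2) ltac:(lra)) as [d2 [Hd2 H2]].
   exists (Rmin d1 d2). split. apply Rmin_glb_lt; auto.
   intros t Ht. assert (Rmin d1 d2 <= d1) by apply Rmin_l. assert (Rmin d1 d2 <= d2) by apply Rmin_r.
   specialize (H1 t ltac:(lra)). specialize (H2 t ltac:(lra)). simpl in H1.
   replace (sm (fun i => F i t) m + F m t - (sm (fun i => F i t0) m + F m t0))
     with ((sm (fun i => F i t) m - sm (fun i => F i t0) m) + (F m t - F m t0)) by ring.
   eapply Rle_lt_trans; [apply Rabs_triang|]. lra. Qed.

Lemma decay (V V' : R -> R) t1 c : c > 0 ->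
  (forall t, t >= t1 -> derivable_pt_lim V t (V' t)) -> (forall t, t >= t1 -> 0 <= V t) ->
  (forall t, t >= t1 -> V' t <= - c * V t) ->
  forall eps, eps > 0 -> exists T, forall t, t >= T -> V t < eps.
Proof. intros Hc Hd H0 HV eps He.
 assert (HV1 : 0 <= V t1) by (apply H0; lra).
 exists (t1 + V t1 / (c * eps) + 1). intros t Ht.
 assert (Hq : 0 <= V t1 / (c * eps)) by (unfold Rdiv; apply Rmult_le_pos; [auto| left; apply Rinv_0_lt_compat; nra]).
 destruct (Rlt_dec (V t) eps) as [|Hn]; auto. exfalso.
 assert (Hmono : forall s, t1 <= s <= t -> V t <= V s).
 { intros s Hs. assert (V t - V s <= 0 * (t - s)).
   { apply (MVB V V'); try lra. intros; apply Hd; lra.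
     intros x Hx. specialize (HV x ltac:(lra)). specialize (H0 x ltac:(lra)). nra. }
   lra. }
 assert (V t - V t1 <= (- c * eps) * (t - t1)).
 { apply (MVB V V'); try lra. intros; apply Hd; lra.
   intros x Hx. specialize (HV x ltac:(lra)). specialize (Hmono x Hx). nra. }
 assert (c * eps * (t - t1) >= c * eps * (V t1 / (c * eps) + 1)) by (apply Rle_ge, Rmult_le_compat_l; nra).
 assert (c * eps * (V t1 / (c * eps) + 1) = V t1 + c * eps) by (field; lra).
 assert (0 <= V t) by (apply H0; lra). nra. Qed.

Lemma phibar_id n phis i : (2 <= n)%nat -> (i < n)%nat ->
  phis i - phibar n phis i = Mop n (fun j => phis j - 2 * PI * INR j / INR n) i.
Proof. intros Hn Hi. assert (HN : 2 <= INR n) by (apply (le_INR 2); auto).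
 unfold phibar, Mop, nx, pv.
 destruct (Nat.eqb_spec i 0) as [->|Hi0].
 - destruct (Nat.eqb_spec 1 n); [lia|]. rewrite minus_INR by lia. simpl INR. field. lra.
 - destruct (Nat.eqb_spec i (n-1)) as [->|Hin].
   + replace (S (n-1)) with n by lia. rewrite Nat.eqb_refl.
     replace (n - 1 - 1)%nat with (n-2)%nat by lia.
     rewrite !minus_INR by lia. simpl INR. field. lra.
   + destruct (Nat.eqb_spec (S i) n); [lia|]. rewrite S_INR, minus_INR by lia.
     replace (i+1)%nat with (S i) by lia. rewrite S_INR. simpl INR. field. lra. Qed.

Lemma small y C V e : 0 < C -> e > 0 -> y * y <= C * V -> V < e * e / C -> Rabs y < e.
Proof. intros HC He H1 H2.
 assert (C * V < e * e). { assert (C * V < C * (e * e / C)) by (apply Rmult_lt_compat_l; auto).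
   assert (C * (e * e / C) = e * e) by (field; lra). lra. }
 destruct (Rlt_dec (Rabs y) e) as [|Hn]; auto. exfalso.
 assert (Rabs y * Rabs y >= e * e) by nra.
 rewrite <- Rabs_mult, Rabs_right in H0 by nra. lra. Qed.

Theorem corollary1
  (n : nat) (hn : (2 <= n)%nat)
  (kphi komega : R) (hkphi : kphi > 0) (hkomega : komega > 0)
  (xi : nat -> R) (k : nat) (hk : (k < n)%nat)
  (hxik : xi k > 0) (hxi : forall i : nat, (i < n)%nat -> i <> k -> xi i = 0)
  (t0 : R) (phi omega : nat -> R -> R)
  (hcphi : forall i : nat, (i < n)%nat -> right_cont_at (phi i) t0)
  (hcomega : forall i : nat, (i < n)%nat -> right_cont_at (omega i) t0)
  (hinit : forall i : nat, (i < n)%nat -> omega i t0 = 0)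
  (hdomega : forall (i : nat) (t : R), (i < n)%nat -> t > t0 ->
     derivable_pt_lim (omega i) t
       (komega * (phibar n (fun j => phi j t) i - phi i t)))
  (hdphi : forall (i : nat) (t : R), (i < n)%nat -> t > t0 ->
     derivable_pt_lim (phi i) t
       (omega i t + kphi * (phibar n (fun j => phi j t) i - phi i t) + xi i)) :
  forall i : nat, (i < n)%nat ->
    tends_at_infty (fun t => phi i t - phibar n (fun j => phi j t) i) 0 /\
    (forall eps : R, eps > 0 -> exists T : R, T > t0 /\
       forall (t l : R), t >= T -> derivable_pt_lim (phi i) t l ->
         Rabs (l - xi k / INR n) < eps).
Proof.
 intros i0 Hi0.
 assert (HN : 2 <= INR n) by (apply (le_INR 2); auto).
 assert (Hn1 : (1 <= n)%nat) by lia.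
 set (a := xi k / INR n).
 pose (P := fun t j => phi j t - 2 * PI * INR j / INR n).
 pose (Q := fun t j => omega j t + xi j - a).
 assert (Hy : forall t j, (j < n)%nat -> phi j t - phibar n (fun j => phi j t) j = Mop n (P t) j).
 { intros t j Hj. exact (phibar_id n (fun j => phi j t) j hn Hj). }
 assert (dP : forall t j, t > t0 -> (j < n)%nat ->
   derivable_pt_lim (fun s => P s j) t (Q t j + a - kphi * Mop n (P t) j)).
 { intros t j Ht Hj.
   apply (dext _ _ ((omega j t + kphi * (phibar n (fun j => phi j t) j - phi j t) + xi j) - 0)).
   { rewrite <- Hy by auto. unfold Q. ring. }
   unfold P. apply (dminus (phi j) (fun _ => 2 * PI * INR j / INR n)). apply hdphi; auto. apply dconst. }
 assert (dQ : forall t j, t > t0 -> (j < n)%nat ->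
   derivable_pt_lim (fun s => Q s j) t (- komega * Mop n (P t) j)).
 { intros t j Ht Hj. unfold Q.
   apply (dext _ _ ((komega * (phibar n (fun j => phi j t) j - phi j t) + 0) - 0)).
   { rewrite <- Hy by auto. ring. }
   apply (dminus (fun s => omega j s + xi j) (fun _ => a)); [|apply dconst].
   apply (dplus (omega j) (fun _ => xi j)). apply hdomega; auto. apply dconst. }
 assert (Ssum : forall t, t > t0 -> sm (fun j => omega j t) n = 0).
 { assert (HdS : forall x, x > t0 -> derivable_pt_lim (fun s => sm (fun j => omega j s) n) x 0).
   { intros x Hx. apply (dext _ _ (sm (fun j => komega * (phibar n (fun j => phi j x) j - phi j x)) n)).
     { rewrite (sm_ext _ (fun j => (- komega) * Mop n (P x) j)).
       2:{ intros j Hj. rewrite <- Hy by auto. ring. }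
       rewrite sm_scal, L1 by auto. ring. }
     apply (dsum (fun j s => omega j s)). intros; apply hdomega; auto. }
   intros t Ht. set (St := sm (fun j => omega j t) n).
   destruct (Req_dec St 0) as [|Hne]; auto. exfalso.
   destruct (rc_sum (fun j s => omega j s) t0 n (fun j Hj => hcomega j Hj) (Rabs St) ltac:(apply Rabs_pos_lt; auto))
     as [d [Hd Hrc]].
   set (s := t0 + Rmin d (t - t0) / 2).
   assert (Rmin d (t - t0) > 0) by (apply Rmin_glb_lt; lra).
   assert (Rmin d (t - t0) <= d) by apply Rmin_l. assert (Rmin d (t - t0) <= t - t0) by apply Rmin_r.
   specialize (Hrc s ltac:(unfold s; lra)). cbv beta in Hrc.
   rewrite (sm_ext (fun i => omega i t0) (fun _ => 0)) in Hrc by auto. rewrite sm_const, Rmult_0_r, Rminus_0_r in Hrc.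
   assert (Heq : sm (fun j => omega j t) n = sm (fun j => omega j s) n).
   { apply (Dcst (fun u => sm (fun j => omega j u) n) (fun _ => 0)); try (unfold s; lra).
     intros; apply HdS; unfold s in *; lra. auto. }
   fold St in Heq. rewrite <- Heq in Hrc. lra. }
 assert (SQ : forall t, t > t0 -> sm (Q t) n = 0).
 { intros t Ht. unfold Q. rewrite (sm_ext _ (fun j => omega j t + (xi j + (-1) * a))) by (intros; ring).
   rewrite !sm_plus, sm_scal, sm_const, Ssum by auto.
   rewrite (sm_only xi n k) by auto. unfold a. field. lra. }
 set (ep := Rmin (Rmin (komega * kphi / (komega + kphi * kphi)) (komega / 2)) 1).
 assert (Hep0 : 0 < ep).
 { unfold ep. apply Rmin_glb_lt; [apply Rmin_glb_lt|]; try lra. apply Rdiv_lt_0_compat; nra. }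
 assert (Hep1 : ep <= 1) by apply Rmin_r.
 assert (Hep2 : ep <= komega / 2).
 { eapply Rle_trans; [apply Rmin_l|apply Rmin_r]. }
 assert (Hep3 : ep * (komega + kphi * kphi) <= komega * kphi).
 { assert (ep <= komega * kphi / (komega + kphi * kphi)) by (eapply Rle_trans; [apply Rmin_l|apply Rmin_l]).
   assert (komega * kphi / (komega + kphi * kphi) * (komega + kphi * kphi) = komega * kphi) by (field; nra).
   assert (0 < komega + kphi * kphi) by nra. nra. }
 set (c := Rmin (komega * kphi / (komega * ((K5 n + 1)/2) + 1)) (ep / (8 * K5 n))).
 assert (Hc : c > 0).
 { pose proof (K5pos n hn). unfold c. apply Rmin_glb_lt; apply Rdiv_lt_0_compat; nra. }
 pose (P' := fun t j => Q t j + a - kphi * Mop n (P t) j).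
 pose (Q' := fun t j => - komega * Mop n (P t) j).
 pose (V := fun t => Vf n komega ep (P t) (Q t)).
 pose (V' := fun t => Df n komega ep (P t) (Q t) (P' t) (Q' t)).
 assert (HdV : forall t, t > t0 -> derivable_pt_lim V t (V' t)).
 { intros t Ht. unfold V, V', Vf, Df.
   apply dminus; [apply dplus; [apply dscal|] | apply dscal].
   - apply (dsum (fun i s => P s i * Mop n (P s) i)). intros i Hi.
     unfold P'. apply dmult; [apply dP; auto | apply dMop; auto; intros; apply dP; auto].
   - apply (dsum (fun i s => Q s i * Q s i)). intros i Hi. unfold Q'. apply dmult; apply dQ; auto.
   - apply (dsum (fun i s => Q s i * Mop n (P s) i)). intros i Hi. unfold P', Q'.
     apply dmult; [apply dQ; auto | apply dMop; auto; intros; apply dP; auto]. }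
 assert (HLB : forall t, V t >= komega / 4 * sm (fun i => Mop n (P t) i * Mop n (P t) i) n + 1/2 * sm (fun i => Q t i * Q t i) n).
 { intros t. apply LB; auto. }
 assert (HV0 : forall t, 0 <= V t).
 { intros t. specialize (HLB t).
   assert (0 <= sm (fun i => Mop n (P t) i * Mop n (P t) i) n) by (apply sm_nonneg; intros; apply Rle_0_sqr).
   assert (0 <= sm (fun i => Q t i * Q t i) n) by (apply sm_nonneg; intros; apply Rle_0_sqr). nra. }
 assert (HVd : forall t, t > t0 -> V' t <= - c * V t).
 { intros t Ht. unfold V, V', c. apply (ALG n kphi komega ep a); auto. }
 assert (Hdec := decay V V' (t0 + 1) c Hc ltac:(intros; apply HdV; lra) ltac:(intros; apply HV0)
                   ltac:(intros; apply HVd; lra)).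
 assert (HYb : forall t, Mop n (P t) i0 * Mop n (P t) i0 <= (4 / komega) * V t).
 { intros t. specialize (HLB t).
   assert (Mop n (P t) i0 * Mop n (P t) i0 <= sm (fun i => Mop n (P t) i * Mop n (P t) i) n)
     by (apply (sm_single (fun i => Mop n (P t) i * Mop n (P t) i)); auto; intros; apply Rle_0_sqr).
   assert (0 <= sm (fun i => Q t i * Q t i) n) by (apply sm_nonneg; intros; apply Rle_0_sqr).
   assert (4 / komega * V t >= 4 / komega * (komega / 4 * sm (fun i => Mop n (P t) i * Mop n (P t) i) n))
     by (apply Rle_ge, Rmult_le_compat_l; [apply Rlt_le, Rdiv_lt_0_compat; lra | nra]).
   assert (4 / komega * (komega / 4 * sm (fun i => Mop n (P t) i * Mop n (P t) i) n) = sm (fun i => Mop n (P t) i * Mop n (P t) i) n) by (field; lra).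
   lra. }
 assert (HQb : forall t, Q t i0 * Q t i0 <= 2 * V t).
 { intros t. specialize (HLB t).
   assert (Q t i0 * Q t i0 <= sm (fun i => Q t i * Q t i) n)
     by (apply (sm_single (fun i => Q t i * Q t i)); auto; intros; apply Rle_0_sqr).
   assert (0 <= sm (fun i => Mop n (P t) i * Mop n (P t) i) n) by (apply sm_nonneg; intros; apply Rle_0_sqr).
   nra. }
 assert (H4k : 0 < 4 / komega) by (apply Rdiv_lt_0_compat; lra).
 split.
 - intros eps He.
   destruct (Hdec (eps * eps / (4 / komega)) ltac:(apply Rdiv_lt_0_compat; nra)) as [T HT].
   exists (Rmax T (t0 + 1)). intros t Ht.
   assert (Rmax T (t0+1) >= T) by (apply Rle_ge, Rmax_l). assert (Rmax T (t0+1) >= t0+1) by (apply Rle_ge, Rmax_r).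
   rewrite Rminus_0_r, Hy by auto. apply (small _ (4 / komega) (V t)); auto. apply HT; lra.
 - intros eps He.
   set (e1 := eps / 2). set (e2 := eps / (2 * kphi)).
   assert (He1 : e1 > 0) by (unfold e1; lra).
   assert (He2 : e2 > 0) by (unfold e2; apply Rdiv_lt_0_compat; lra).
   destruct (Hdec (Rmin (e2 * e2 / (4 / komega)) (e1 * e1 / 2))
     ltac:(apply Rmin_glb_lt; apply Rdiv_lt_0_compat; nra)) as [T HT].
   exists (Rmax T (t0 + 1)).
   assert (Rmax T (t0+1) >= T) by (apply Rle_ge, Rmax_l). assert (Rmax T (t0+1) >= t0+1) by (apply Rle_ge, Rmax_r).
   split; [lra|]. intros t l Ht Hl.
   assert (Hl2 := uniqueness_limite _ _ _ _ Hl (hdphi i0 t Hi0 ltac:(lra))).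
   assert (HVt := HT t ltac:(lra)).
   assert (Hm1 : Rmin (e2 * e2 / (4 / komega)) (e1 * e1 / 2) <= e2 * e2 / (4 / komega)) by apply Rmin_l.
   assert (Hm2 : Rmin (e2 * e2 / (4 / komega)) (e1 * e1 / 2) <= e1 * e1 / 2) by apply Rmin_r.
   assert (A1 : Rabs (Mop n (P t) i0) < e2) by (apply (small _ (4 / komega) (V t)); auto; lra).
   assert (A2 : Rabs (Q t i0) < e1) by (apply (small _ 2 (V t)); auto; lra).
   assert (E : l - a = Q t i0 + (- kphi) * Mop n (P t) i0).
   { rewrite Hl2. rewrite <- Hy by auto. unfold Q. ring. }
   rewrite E. eapply Rle_lt_trans; [apply Rabs_triang|]. rewrite Rabs_mult, (Rabs_left (- kphi)) by lra.
   assert (kphi * Rabs (Mop n (P t) i0) <= kphi * e2) by (apply Rmult_le_compat_l; lra).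
   assert (kphi * e2 = eps / 2) by (unfold e2; field; lra).
   unfold e1 in A2. lra.
Qed.
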